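(* Let $R$ be a commutative ring with $1$ such that every maximal ideal of $R$ is quasi-pure. Then $R$ is zero-dimensional, i.e. every prime ideal of $R$ is maximal.
   Context: An ideal $I$ of a commutative ring $R$ is called quasi-pure if for each $f\in I$ there exists an integer $n\ge 1$ such that $\operatorname{Ann}(f^n)+I=R$ (equivalently, for each $f\in I$ there is $g\in I$ with $f(1-g)$ nilpotent). *)

(* Defs.v *)
From HB Require Import structures.
From mathcomp Require Import all_boot all_order all_algebra.
Set Implicit Arguments. Unset Strict Implicit. Unset Printing Implicit Defensive.
Import GRing.Theory.
Local Open Scope ring_scope.

Section IdealDefs.
Variable R : comPzRingType.

Definition is_ideal (I : R -> Prop) : Prop :=
  [/\ I 0, (forall x y, I x -> I y -> I (x + y)) & (forall r x, I x -> I (r * x))].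

Definition prime_ideal (I : R -> Prop) : Prop :=
  [/\ is_ideal I, ~ I 1 & (forall a b, I (a * b) -> I a \/ I b)].

Definition maximal_ideal (I : R -> Prop) : Prop :=
  [/\ is_ideal I, ~ I 1 &
      (forall J : R -> Prop, is_ideal J -> ~ J 1 ->
         (forall x, I x -> J x) -> forall x, J x -> I x)].

Definition ann (x : R) : R -> Prop := fun a => a * x = 0.

Definition ideal_sum (I J : R -> Prop) : R -> Prop :=
  fun z => exists a b, [/\ I a, J b & z = a + b].

Definition quasi_pure (I : R -> Prop) : Prop :=
  forall f, I f -> exists n : nat, (1 <= n)%N /\ forall z, ideal_sum (ann (f ^+ n)) I z.

End IdealDefs.

(* Main.v *)
Require Import Defs.
From HB Require Import structures.
From mathcomp Require Import all_boot all_order all_algebra.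
From mathcomp Require Import boolp classical_sets.
Import GRing.Theory.
Local Open Scope ring_scope.

Set Implicit Arguments.
Section Aux.
Variable R : comPzRingType.

Definition Qfam (J : R -> Prop) (X : set R) : Prop :=
  X = set0 \/ [/\ is_ideal X, ~ X 1 & forall x, J x -> X x].

Lemma exists_max (J : R -> Prop) : is_ideal J -> ~ J 1 ->
  exists M, maximal_ideal M /\ forall x, J x -> M x.
Proof.
move=> IJ J1.
have [|A [QA Amax]] := @Zorn_bigcup R (Qfam J).
  move=> F FQ Ftot.
  have [[X FX Xne]|none] := pselect (exists2 X, F X & X <> set0).
    right.
    have FI : forall Y, F Y -> Y <> set0 ->
        [/\ is_ideal Y, ~ Y 1 & forall x, J x -> Y x].
      by move=> Y /FQ [->//|H].
    have FI' : forall Y y, F Y -> Y y -> [/\ is_ideal Y, ~ Y 1 & forall x, J x -> Y x].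
      move=> Y y FY Yy; apply: FI => // Y0; by rewrite Y0 in Yy.
    split.
    - split.
      + case: (FI X FX Xne) => [[H0 _ _] _ _]; by exists X.
      + move=> x y [X1 F1 x1] [X2 F2 y2].
        case: (Ftot _ _ F1 F2) => S.
          exists X2 => //; case: (FI' _ _ F2 y2) => [[_ Hadd _] _ _].
          by apply: Hadd => //; apply: S.
        exists X1 => //; case: (FI' _ _ F1 x1) => [[_ Hadd _] _ _].
        by apply: Hadd => //; apply: S.
      + move=> r x [X1 F1 x1]; exists X1 => //.
        by case: (FI' _ _ F1 x1) => [[_ _ Hm] _ _]; apply: Hm.
    - move=> [X1 F1 x1]; by case: (FI' _ _ F1 x1).
    - move=> x Jx; exists X => //; by case: (FI X FX Xne) => _ _; apply.
  left; apply/seteqP; split => // x [X FX Xx].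
  exfalso; apply: none; exists X => // X0; by rewrite X0 in Xx.
have QJ : Qfam J J by right.
case: QA => [A0|[IA A1 JA]].
  exfalso; apply: (Amax J) => //; rewrite A0; split => //.
  move=> H; case: IJ => J0 _ _; exact: (H 0 J0).
exists A; split => //; split => // K IK K1 AK x Kx.
apply: contrapT => nAx; apply: (Amax K); first by split => // H; exact/nAx/H.
by right; split => // y Jy; apply/AK/JA.
Qed.

Lemma prime_pow (P : R -> Prop) f n : prime_ideal P -> (1 <= n)%N -> P (f ^+ n) -> P f.
Proof.
move=> [IP _ Pp]; elim: n => // n IH _.
rewrite exprS => /Pp [//|].
case: n IH => [_|n IH]; last exact: IH.
rewrite expr0 => P1; case: IP => _ _ Hm; by rewrite -(mulr1 f); apply: Hm.
Qed.

End Aux.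
Unset Implicit Arguments.

Theorem lemma2p6 (R : comPzRingType)
  (hR : forall M : R -> Prop, maximal_ideal M -> quasi_pure M) :
  forall P : R -> Prop, prime_ideal P -> maximal_ideal P.
Proof.
move=> P PP; have PP' := PP; case: PP' => [IP P1 Pp].
split => // J IJ J1 PJ x Jx.
have [M [MM JM]] := exists_max IJ J1.
have := hR M MM x (JM x Jx) => -[n [n1 H]].
apply: (@prime_pow _ _ _ n PP) => //.
have [a [m [Aa Mm e]]] := H 1.
have : P (a * x ^+ n) by rewrite Aa; case: IP.
case/Pp => [Pa|//].
exfalso; case: MM => [[_ Madd _] M1 _]; apply: M1; rewrite e.
by apply: Madd => //; apply: JM; apply: PJ.
Qed.
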